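(* Let $(\alpha_j)_{j\ge0}$ be a deterministic sequence in the open unit disc with only finitely many nonzero terms, and set $\alpha_{-1}:=-1$. Let $\rho_j=(1-|\alpha_j|^2)^{1/2}$, $\Theta_j=\begin{pmatrix}\alpha_j&\rho_j\\ \rho_j&-\overline{\alpha_j}\end{pmatrix}$, $\mathcal{L}=\mathrm{Diag}(\Theta_0,\Theta_2,\dots)$, $\mathcal{M}=\mathrm{Diag}(1,\Theta_1,\Theta_3,\dots)$ and $\mathcal{C}=\mathcal{L}\mathcal{M}$ (infinite matrices indexed by positive integers). Then for every $k\ge2$, $$\mathrm{tr}(\mathcal{C}^k) = -k\sum_{j\ge-1}\overline{\alpha_j}\,\rho_{j+1}^2\rho_{j+2}^2\cdots\rho_{j+k-1}^2\,\alpha_{j+k} + O\Big(k^3\sum_{j\ge-1}|\alpha_j|^3\Big),$$ where the implicit constant in $O$ is absolute.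
   Context: With finitely many nonzero $\alpha_j$, $\mathcal{C}^k$ has only finitely many nonzero diagonal entries, so the trace is a finite sum. *)

(* Defs.v *)
(* Complex numbers: an arbitrary numClosedFieldType R. *)
From HB Require Import structures.
From mathcomp Require Import all_boot all_order all_algebra.
From Stdlib Require Import ClassicalEpsilon.
Set Implicit Arguments. Unset Strict Implicit. Unset Printing Implicit Defensive.
Import Order.TTheory GRing.Theory Num.Theory.
Local Open Scope ring_scope.

Section CMV.
Variable R : numClosedFieldType.
Variable alpha : nat -> R.

Definition rho (j : nat) : R := sqrtC (1 - `|alpha j| ^+ 2).

(* Entry (p,q), p,q in {0,1} (false=0,true=1), of Θ_j *)
Definition theta (j : nat) (p q : bool) : R :=
  match p, q with
  | false, false => alpha j
  | false, true => rho j
  | true, false => rho j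
  | true, true => - (alpha j)^*
  end.

(* Infinite matrices indexed by nat; 0-based index i stands for the paper's
   positive index i+1. *)
(* L = Diag(Θ_0, Θ_2, ...): block Θ_{2m} occupies rows/cols 2m, 2m+1. *)
Definition Lmx (i j : nat) : R :=
  if i./2 == j./2 then theta (2 * i./2) (odd i) (odd j) else 0.

(* M = Diag(1, Θ_1, Θ_3, ...): entry (0,0) is 1, block Θ_{2m+1} occupies
   rows/cols 2m+1, 2m+2. *)
Definition Mmx (i j : nat) : R :=
  if (i == 0)%N || (j == 0)%N then (if (i == 0)%N && (j == 0)%N then 1 else 0)
  else if i.-1./2 == j.-1./2 then theta (2 * i.-1./2).+1 (odd i.-1) (odd j.-1)
  else 0.

(* C = L M.  Since M m j = 0 unless |m - j| <= 1, the infinite sum over m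
   reduces exactly to m < j + 2. *)
Definition Cmx (i j : nat) : R := \sum_(m < j.+2) Lmx i m * Mmx m j.

(* C^k.  Since C l j = 0 unless |l - j| <= 2, the infinite sum over l in
   (C^k C) i j reduces exactly to l < j + 3. *)
Fixpoint Cpow (k : nat) : nat -> nat -> R :=
  match k with
  | 0 => fun i j => (i == j)%:R
  | k'.+1 => fun i j => \sum_(l < j.+3) Cpow k' i l * Cmx l j
  end.

(* aext n = α_{n-1}, with the convention α_{-1} = -1. *)
Definition aext (n : nat) : R := if n is n'.+1 then alpha n' else -1.

(* rhoext n = ρ_{n-1} (only used for n >= 1). *)
Definition rhoext (n : nat) : R := sqrtC (1 - `|aext n| ^+ 2).

(* Summand of the main term for j = n - 1 >= -1:
   conj(α_j) ρ_{j+1}^2 ... ρ_{j+k-1}^2 α_{j+k} *)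
Definition main_term (k n : nat) : R :=
  (aext n)^* * (\prod_(1 <= i < k) rhoext (n + i) ^+ 2) * aext (n + k).

End CMV.

(* Sum of a finitely supported sequence: \sum_(i < N) f i for some N beyond
   which f vanishes (chosen by classical choice; the value does not depend
   on the choice when f is finitely supported). *)
Definition fsum (R : nmodType) (f : nat -> R) : R :=
  \sum_(i < epsilon (inhabits 0%N) (fun N => forall i, (N <= i)%N -> f i = 0)) f i.

Definition trC (R : numClosedFieldType) (alpha : nat -> R) (k : nat) : R :=
  fsum (fun i => Cpow alpha k i i).

(* Main.v *)
Require Import Defs.
From HB Require Import structures.
From mathcomp Require Import all_boot all_order all_algebra.
From mathcomp Require Import zify ring.
From Stdlib Require Import ClassicalEpsilon FunctionalExtensionality.
Set Implicit Arguments. Unset Strict Implicit. Unset Printing Implicit Defensive.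
Import Order.TTheory GRing.Theory Num.Theory.
Local Open Scope ring_scope.

Lemma sum_widen (V : nmodType) n m (F : nat -> V) : (n <= m)%N ->
  (forall l, (n <= l)%N -> (l < m)%N -> F l = 0) ->
  \sum_(l < m) F l = \sum_(l < n) F l.
Proof.
move=> H HF; rewrite -!(big_mkord xpredT) (@big_cat_nat _ _ _ n 0 m) //=.
rewrite [X in _ + X]big1_seq ?addr0 // => l /andP[_]; rewrite mem_index_iota => /andP[].
exact: HF.
Qed.

Lemma sum_widenR (V : nmodType) n m (F : nat -> V) : (n <= m)%N ->
  (forall l, (n <= l)%N -> (l < m)%N -> F l = 0) ->
  \sum_(l < n) F l = \sum_(l < m) F l.
Proof. by move=> H HF; rewrite (sum_widen H HF). Qed.

Lemma fsumE (V : nmodType) (f : nat -> V) N : (forall i, (N <= i)%N -> f i = 0) ->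
  forall M, (N <= M)%N -> fsum f = \sum_(i < M) f i.
Proof.
move=> HN M HM; rewrite /fsum.
set N0 := epsilon _ _.
have H0 : forall i, (N0 <= i)%N -> f i = 0 :=
  epsilon_spec (inhabits 0%N) (fun N => forall i, (N <= i)%N -> f i = 0) (ex_intro _ N HN).
rewrite (@sum_widenR _ N0 (maxn N0 M)) ?leq_maxl //; last by move=> i Hi _; apply: H0.
rewrite (@sum_widen _ M (maxn N0 M)) ?leq_maxr // => i Hi _; apply: HN; lia.
Qed.

Section Walk.
Variable R : numClosedFieldType.
Variable alpha : nat -> R.
Local Notation b := (aext alpha).
Local Notation r := (rhoext alpha).

Definition dir (t s : nat) : bool := ~~ odd (t + s).
Definition nxt t s := if dir t s then s.+1 else s.-1.
Definition sw t s := if dir t s then r s.+1 else r s.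
Definition dg t s := if dir t s then b s.+1 else - (b s)^*.
Definition Xk (t : nat) := if odd t then Mmx alpha else Lmx alpha.

Lemma dir_odd t s : dir t s = dir (odd t) s.
Proof. by rewrite /dir !oddD oddb. Qed.

Lemma L_dec s j : Lmx alpha s j = sw 0 s * (nxt 0 s == j)%:R + dg 0 s * (s == j)%:R.
Proof.
rewrite /Lmx /sw /nxt /dg /dir add0n.
rewrite -(odd_double_half s) -(odd_double_half j).
move: (odd s) (s./2) (odd j) (j./2) => [] m [] m'; rewrite !half_bit_double /= ?odd_double /=;
  rewrite -?mul2n ?add0n ?add1n /=;
  (have [<-|Hne] := eqVneq m m');
  rewrite /= ?eqxx ?mul2n.
all: try (have -> : (m.*2.+1 == m.*2) = false by apply/eqP; lia).
all: try (have -> : (m.*2 == m.*2.+1) = false by apply/eqP; lia).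
all: try (have -> : (m.*2.+1.-1 == m.*2.+1) = false by apply/eqP; lia).
all: try (have -> : (m.*2.+1.+1 == m.*2.+1) = false by apply/eqP; lia).
all: try (have -> : (m.*2.+1.-1 == m.*2) = true by apply/eqP; lia).
all: try (have -> : (m.*2.+1 == m'.*2) = false by apply/eqP; lia).
all: try (have -> : (m.*2 == m'.*2) = false by apply/eqP; lia).
all: try (have -> : (m.*2.+1 == m'.*2.+1) = false by apply/eqP; lia).
all: try (have -> : (m.*2 == m'.*2.+1) = false by apply/eqP; lia).
all: try (have -> : (m.*2.+1.-1 == m'.*2.+1) = false by apply/eqP; lia).
all: try (have -> : (m.*2.+1.-1 == m'.*2) = false by apply/eqP; lia).
all: rewrite /= ?mulr0 ?mulr1 ?addr0 ?add0r //.
Qed.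

Lemma b0 : b 0 = -1. Proof. by []. Qed.
Lemma r0 : r 0 = 0.
Proof. by rewrite /rhoext /= normrN normr1 expr1n subrr sqrtC0. Qed.

Lemma M_dec s j : Mmx alpha s j = sw 1 s * (nxt 1 s == j)%:R + dg 1 s * (s == j)%:R.
Proof.
rewrite /Mmx /sw /nxt /dg /dir.
case: s => [|s]; case: j => [|j] /=.
- by rewrite r0 mul0r add0r rmorphN rmorph1 opprK mulr1.
- by rewrite r0 !mulr0 addr0.
- rewrite -(odd_double_half s).
  by move: (odd s) (s./2) => [] m /=; rewrite ?odd_double /= ?mulr0 ?addr0.
rewrite !eqSS.
rewrite -(odd_double_half s) -(odd_double_half j).
move: (odd s) (s./2) (odd j) (j./2) => [] m [] m'; rewrite !half_bit_double /= ?odd_double /=;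
  rewrite -?mul2n ?add0n ?add1n /=;
  (have [<-|Hne] := eqVneq m m');
  rewrite /= ?eqxx ?mul2n.
all: try (have -> : (m.*2.+1 == m.*2) = false by apply/eqP; lia).
all: try (have -> : (m.*2 == m.*2.+1) = false by apply/eqP; lia).
all: try (have -> : (m.*2.+1.+1 == m.*2.+1) = false by apply/eqP; lia).
all: try (have -> : (m.*2.+1.+1.-1 == m.*2.+1) = true by apply/eqP; lia).
all: try (have -> : (m.*2.+1.+1 == m.*2.+1.+1) = true by apply/eqP; lia).
all: try (have -> : (m.*2.+1.+1 == m'.*2.+1.+1) = false by apply/eqP; lia).
all: try (have -> : (m.*2.+1.+1 == m'.*2.+1) = false by apply/eqP; lia).
all: try (have -> : (m.*2.+1 == m'.*2) = false by apply/eqP; lia).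
all: try (have -> : (m.*2 == m'.*2) = false by apply/eqP; lia).
all: try (have -> : (m.*2.+1 == m'.*2.+1) = false by apply/eqP; lia).
all: try (have -> : (m.*2 == m'.*2.+1) = false by apply/eqP; lia).
all: try (have -> : (m.*2.+1.+1.-1 == m'.*2.+1) = false by apply/eqP; lia).
all: try (have -> : (m.*2.+1.+1.-1 == m'.*2) = false by apply/eqP; lia).
all: try (have -> : (m.*2.+1 == m.*2.+2) = false by apply/eqP; lia).
all: try (have -> : (m.*2.+1 == m'.*2.+2) = false by apply/eqP; lia).
all: rewrite /= ?mulr0 ?mulr1 ?addr0 ?add0r //.
Qed.

Lemma sw_odd t s : sw t s = sw (odd t) s. Proof. by rewrite /sw dir_odd. Qed.
Lemma nxt_odd t s : nxt t s = nxt (odd t) s. Proof. by rewrite /nxt dir_odd. Qed.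
Lemma dg_odd t s : dg t s = dg (odd t) s. Proof. by rewrite /dg dir_odd. Qed.

Lemma Xk_dec t s j : Xk t s j = sw t s * (nxt t s == j)%:R + dg t s * (s == j)%:R.
Proof.
rewrite /Xk sw_odd nxt_odd dg_odd; case: (odd t); [exact: M_dec | exact: L_dec].
Qed.

Lemma Xk_band t s j : (j.+2 <= s)%N -> Xk t s j = 0.
Proof.
move=> H; rewrite Xk_dec.
have -> : (nxt t s == j) = false by rewrite /nxt; case: (dir t s); apply/eqP; lia.
have -> : (s == j) = false by apply/eqP; lia.
by rewrite !mulr0 addr0.
Qed.

Lemma sum_delta n (s : nat) (F : nat -> R) :
  \sum_(l < n) (s == l :> nat)%:R * F l = if (s < n)%N then F s else 0.
Proof.
case: ltnP => H.
  rewrite (bigD1 (Ordinal H)) //= eqxx mul1r big1 ?addr0 // => l Hl.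
  have -> : (s == l) = false.
    by apply/negbTE; apply: contra Hl => /eqP E; apply/eqP/val_inj; rewrite /= E.
  by rewrite mul0r.
rewrite big1 // => l _; have -> : (s == l) = false by apply/eqP => E; move: (ltn_ord l); lia.
by rewrite mul0r.
Qed.

Fixpoint W (t0 n s : nat) {struct n} : nat -> R :=
  match n with
  | 0 => fun j => (s == j)%:R
  | n'.+1 => fun j => sw t0 s * W t0.+1 n' (nxt t0 s) j + dg t0 s * W t0.+1 n' s j
  end.

Lemma W_S t0 n s j :
  W t0 n.+1 s j = sw t0 s * W t0.+1 n (nxt t0 s) j + dg t0 s * W t0.+1 n s j.
Proof. by []. Qed.

Lemma W_last n t0 s j :
  W t0 n.+1 s j = \sum_(l < j.+2) W t0 n s l * Xk (t0 + n) l j.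
Proof.
elim: n t0 s j => [|n IH] t0 s j.
  rewrite /= addn0 (sum_delta _ _ (fun l => Xk t0 l j)) -Xk_dec; case: ltnP => // H.
  by rewrite Xk_band.
rewrite W_S !IH -addSnnS !big_distrr -big_split /=.
by apply: eq_bigr => l _; rewrite !mulrA -mulrDl.
Qed.

Lemma Lmx_band l m : (m.+2 <= l)%N -> Lmx alpha l m = 0.
Proof. by move=> H; have := Xk_band 0 H; rewrite /Xk. Qed.

Lemma Cpow_W k i j : Cpow alpha k i j = W 0 (k.*2) i j.
Proof.
elim: k j => [|k IH] j //.
rewrite doubleS W_last add0n [LHS]/=.
transitivity (\sum_(l < j.+3) W 0 k.*2 i l * Cmx alpha l j).
  by apply: eq_bigr => l _; rewrite IH.
have -> : Xk (k.*2).+1 = Mmx alpha by rewrite /Xk oddS odd_double.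
have EL : Xk (k.*2) = Lmx alpha by rewrite /Xk odd_double.
under [RHS]eq_bigr => m _.
  rewrite W_last add0n EL big_distrl /=.
  rewrite (@sum_widenR R m.+2 j.+3 (fun l => W 0 k.*2 i l * Lmx alpha l m * Mmx alpha m j)); last first.
    - by move=> l Hl _; rewrite Lmx_band // mulr0 mul0r.
    - by move: (ltn_ord m); lia.
  over.
rewrite exchange_big /=; apply: eq_bigr => l _.
by rewrite /Cmx big_distrr /=; apply: eq_bigr => m _; rewrite mulrA.
Qed.

Lemma dirSt t s : dir t.+1 s = ~~ dir t s.
Proof. by rewrite /dir addSn oddS negbK. Qed.
Lemma dirSs t s : dir t s.+1 = ~~ dir t s.
Proof. by rewrite /dir addnS oddS negbK. Qed.

Lemma nxt_inv t s j : nxt t s = j -> s = (if dir t j then j.+1 else j.-1).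
Proof.
rewrite /nxt => <-; case Hd: (dir t s) => /=; first by rewrite dirSs Hd.
case: s Hd => [|s] Hd /=; first by rewrite Hd.
by rewrite -[dir t s]negbK -dirSs Hd.
Qed.

Lemma nxt_inj t : injective (nxt t).
Proof. by move=> s1 s2 E; rewrite (nxt_inv E) -(nxt_inv (erefl (nxt t s2))). Qed.

Fixpoint spos (t0 n s : nat) {struct n} : nat :=
  match n with 0 => s | n'.+1 => spos t0.+1 n' (nxt t0 s) end.
Fixpoint spw (t0 n s : nat) {struct n} : R :=
  match n with 0 => 1 | n'.+1 => sw t0 s * spw t0.+1 n' (nxt t0 s) end.

Lemma spos_inj t0 n : injective (spos t0 n).
Proof.
elim: n t0 => [|n IH] t0 s1 s2 //= E.
exact: (nxt_inj (IH _ _ _ E)).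
Qed.

Lemma nxt_le t s : (nxt t s <= s.+1)%N.
Proof. by rewrite /nxt; case: dir => //; lia. Qed.
Lemma nxt_ge t s : (s <= (nxt t s).+1)%N.
Proof. by rewrite /nxt; case: dir => //; lia. Qed.

Lemma spos_le t0 n s : (spos t0 n s <= s + n)%N.
Proof.
elim: n t0 s => [|n IH] t0 s /=; first by rewrite addn0.
have := IH t0.+1 (nxt t0 s); have := nxt_le t0 s; lia.
Qed.
Lemma spos_ge t0 n s : (s <= spos t0 n s + n)%N.
Proof.
elim: n t0 s => [|n IH] t0 s /=; first by rewrite addn0.
have := IH t0.+1 (nxt t0 s); have := nxt_ge t0 s; lia.
Qed.

Lemma W_exp n t0 s j :
  W t0 n s j = spw t0 n s * (spos t0 n s == j)%:R +
    \sum_(u < n) spw t0 u s * dg (t0 + u)%N (spos t0 u s) *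
                 W (t0 + u)%N.+1 (n - u.+1)%N (spos t0 u s) j.
Proof.
elim: n t0 s => [|n IH] t0 s.
  by rewrite big_ord0 addr0 /= mul1r.
rewrite W_S IH big_ord_recl.
rewrite (_ : spw t0 ord0 s * _ * _ = dg t0 s * W t0.+1 n s j); last first.
  by rewrite /= addn0 subn1 mul1r.
rewrite mulrDr big_distrr /= -!addrA; congr (_ + _); first by rewrite mulrA.
rewrite addrC; congr (_ + _); apply: eq_bigr => u _.
by rewrite !mulrA addSnnS subSS.
Qed.

Hypothesis Ha : forall j, `|alpha j| < 1.

Lemma b_le1 n : `|b n| <= 1.
Proof. by case: n => [|n] /=; [rewrite normrN normr1 | exact: ltW]. Qed.

Lemma bsq_le1 n : `|b n| ^+ 2 <= 1.
Proof. exact: exprn_ile1 (normr_ge0 _) (b_le1 n). Qed.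

Lemma r_ge0 n : 0 <= r n.
Proof. by rewrite /rhoext sqrtC_ge0 subr_ge0 bsq_le1. Qed.

Lemma r_sq n : r n ^+ 2 = 1 - `|b n| ^+ 2.
Proof. exact: sqrtCK. Qed.

Lemma r_le1 n : r n <= 1.
Proof.
rewrite -(expr_le1 (ltn0Sn 1) (r_ge0 n)) r_sq.
by rewrite lerBlDr lerDl exprn_ge0.
Qed.

Lemma r_conj n : (r n)^* = r n.
Proof. exact: geC0_conj (r_ge0 n). Qed.

Lemma r_norm n : `|r n| = r n.
Proof. exact: ger0_norm (r_ge0 n). Qed.

Lemma sw_norm t s : `|sw t s| <= 1.
Proof. by rewrite /sw; case: dir; rewrite r_norm r_le1. Qed.

Lemma spw_norm t0 n s : `|spw t0 n s| <= 1.
Proof.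
elim: n t0 s => [|n IH] t0 s /=; first by rewrite normr1.
rewrite normrM; apply: mulr_ile1 => //; exact: sw_norm.
Qed.

Definition sstar t j := if dir t j then j.+1 else j.-1.

Lemma nxt_eq t l j : (nxt t l == j) = (l == sstar t j).
Proof.
apply/eqP/eqP => [E|->]; first exact: nxt_inv E.
rewrite /sstar /nxt; case Hd: (dir t j).
  by rewrite dirSs Hd.
case: j Hd => [|j] Hd /=; first by rewrite Hd.
by rewrite -[dir t j]negbK -dirSs Hd.
Qed.

Lemma sum_delta' n (s : nat) (F : nat -> R) :
  \sum_(l < n) F l * (l == s :> nat)%:R = if (s < n)%N then F s else 0.
Proof.
rewrite -(sum_delta _ _ F); apply: eq_bigr => l _; by rewrite mulrC eq_sym.
Qed.

Lemma step_eval t (w : nat -> R) j :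
  \sum_(l < j.+2) w l * Xk t l j =
  dg t j * w j + (if dir t j then r j.+1 * w j.+1 else r j * w j.-1).
Proof.
under eq_bigr => l _ do rewrite Xk_dec mulrDr nxt_eq !mulrA.
rewrite big_split /= (sum_delta' _ _ (fun l => w l * sw t l))
  (sum_delta' _ _ (fun l => w l * dg t l)) ltnS leqnSn addrC mulrC; congr (_ + _).
rewrite /sstar /sw; case Hd: (dir t j) => /=.
  by rewrite ltnSn dirSs Hd mulrC.
rewrite (_ : (j.-1 <= j.+1)%N = true); last by lia.
case: j Hd => [|j] Hd /=; first by rewrite Hd mulrC.
by rewrite -[dir t j]negbK -dirSs Hd mulrC.
Qed.

Lemma blk (a rho x y : R) : rho^* = rho -> rho ^+ 2 + a * a^* = 1 ->
  `|a * x + rho * y| ^+ 2 + `|- a^* * y + rho * x| ^+ 2 = `|x| ^+ 2 + `|y| ^+ 2.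
Proof.
move=> Hr Hs; rewrite !normCK !rmorphD !rmorphM /= !rmorphN /= conjCK Hr.
transitivity ((rho ^+ 2 + a * a^*) * (x * x^* + y * y^*)); first by ring.
by rewrite Hs mul1r.
Qed.

Definition nsq N (v : nat -> R) := \sum_(j < N) `|v j| ^+ 2.

Lemma nsqS N v : nsq N.+1 v = nsq N v + `|v N| ^+ 2.
Proof. by rewrite /nsq big_ord_recr. Qed.

Lemma step_norm t (v : nat -> R) m :
  nsq (m.*2 + odd t) (fun j => \sum_(l < j.+2) v l * Xk t l j) = nsq (m.*2 + odd t) v.
Proof.
elim: m => [|m IH].
  rewrite /nsq /=; case Ho: (odd t) => /=; last by rewrite !big_ord0.
  rewrite !big_ord1 step_eval.
  rewrite /dg; have -> : dir t 0 = false by rewrite /dir addn0 Ho.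
  by rewrite /= r0 mul0r addr0 rmorphN rmorph1 /= opprK mul1r.
set N := (m.*2 + odd t)%N.
have -> : ((m.+1).*2 + odd t)%N = N.+2 by rewrite /N doubleS.
rewrite !nsqS -!addrA IH; congr (_ + _).
have HN : dir t N = true by rewrite /dir /N !oddD odd_double; case: (odd t).
rewrite !step_eval HN dirSs HN /= /dg HN dirSs HN /=.
apply: blk; first exact: r_conj.
by rewrite r_sq -normCK subrK.
Qed.

Lemma nsq_tail N M v : (N <= M)%N -> (forall j, (N <= j)%N -> v j = 0) ->
  nsq M v = nsq N v.
Proof.
move=> H Hv; rewrite /nsq (sum_widen (F := fun j => `|v j| ^+ 2) H) // => l Hl _.
by rewrite Hv // normr0 expr0n.
Qed.

Lemma W_supp n t0 s j : (s + n < j)%N -> W t0 n s j = 0.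
Proof.
elim: n t0 s => [|n IH] t0 s H.
  by rewrite /=; have -> : (s == j) = false by apply/eqP; lia.
have h1 := nxt_le t0 s.
by rewrite W_S !IH ?mulr0 ?addr0 //; lia.
Qed.

Lemma W_nsq n t0 s N : (s + n < N)%N -> nsq N (W t0 n s) = 1.
Proof.
elim: n N => [|n IH] N H.
  rewrite /nsq.
  rewrite (eq_bigr (fun j : 'I_N => (s == j :> nat)%:R * 1)); last first.
    by move=> j _ /=; case: (s == j :> nat); rewrite ?normr1 ?normr0 ?expr1n ?expr0n ?mulr1.
  rewrite (sum_delta _ _ (fun => 1)); have -> : (s < N)%N by lia. by [].
have -> : W t0 n.+1 s = fun j => \sum_(l < j.+2) W t0 n s l * Xk (t0 + n) l j.
  by apply: functional_extensionality => j; rewrite W_last.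
rewrite -(@nsq_tail N (N.*2 + odd (t0 + n))); last 2 first.
- by rewrite -addnn; lia.
- by move=> j Hj; rewrite -W_last W_supp //; lia.
rewrite step_norm (@nsq_tail N) ?IH //; first by lia.
- by rewrite -addnn; lia.
- by move=> j Hj; rewrite W_supp //; lia.
Qed.

Lemma term_le_nsq N v j : (j < N)%N -> `|v j| ^+ 2 <= nsq N v.
Proof.
move=> H; rewrite /nsq (bigD1 (Ordinal H)) //= lerDl.
by apply: sumr_ge0 => i _; exact: exprn_ge0.
Qed.

Lemma W_le1 t0 n s j : `|W t0 n s j| <= 1.
Proof.
rewrite -(expr_le1 (ltn0Sn 1) (normr_ge0 _)).
rewrite -(@W_nsq n t0 s (s + n + j)%N.+1); last by lia.
by apply: term_le_nsq; lia.
Qed.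

Definition P (m n : nat) := \prod_(m <= e < n) r e.

Lemma spw_right t0 n s : dir t0 s ->
  spos t0 n s = (s + n)%N /\ spw t0 n s = P s.+1 (s + n)%N.+1.
Proof.
elim: n t0 s => [|n IH] t0 s Hd.
  by rewrite addn0 /P big_geq.
have Hd' : dir t0.+1 s.+1 by rewrite dirSt dirSs negbK.
have [E1 E2] := IH t0.+1 s.+1 Hd'.
rewrite /= /nxt /sw Hd E1 E2 addSnnS; split => //.
rewrite /P (@big_ltn _ 1 *%R s.+1 (s + n.+1).+1 (fun e => r e)) //.
lia.
Qed.

Lemma spw_left t0 n s : ~~ dir t0 s -> (n <= s)%N ->
  spos t0 n s = (s - n)%N /\ spw t0 n s = P (s - n)%N.+1 s.+1.
Proof.
elim: n t0 s => [|n IH] t0 s Hd Hn.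
  by rewrite subn0 /P big_geq.
case: s Hd Hn => [|s] Hd Hn //.
have Hd' : ~~ dir t0.+1 s by rewrite dirSt negbK -[dir t0 s]negbK -dirSs.
have [E1 E2] := IH t0.+1 s Hd' Hn.
rewrite /= /nxt /sw (negbTE Hd) /= E1 E2 subSS; split => //.
rewrite /P (@big_nat_recr _ 1 *%R s.+1 (s - n).+1 (fun e => r e)); last by lia.
by rewrite mulrC.
Qed.

Lemma spw_left0 t0 n s : ~~ dir t0 s -> (s < n)%N -> spw t0 n s = 0.
Proof.
elim: n t0 s => [|n IH] t0 s Hd Hn //.
case: s Hd Hn => [|s] Hd Hn.
  by rewrite /= /sw (negbTE Hd) r0 mul0r.
have Hd' : ~~ dir t0.+1 s by rewrite dirSt negbK -[dir t0 s]negbK -dirSs.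
by rewrite /= /nxt (negbTE Hd) /= IH ?mulr0.
Qed.

Lemma dir_right t0 u s : dir t0 s -> dir (t0 + u)%N (s + u)%N.
Proof.
rewrite /dir; have -> : (t0 + u + (s + u) = (t0 + s) + u.*2)%N by lia.
by rewrite (oddD (t0 + s)) odd_double addbF.
Qed.

Lemma dir_left t0 u s : (u <= s)%N -> dir (t0 + u)%N (s - u)%N = dir t0 s.
Proof. by move=> H; rewrite /dir; have -> : (t0 + u + (s - u) = t0 + s)%N by lia. Qed.

Definition Z t0 n s j := spw t0 n s * (spos t0 n s == j)%:R.
Definition cc t0 u s := spw t0 u s * dg (t0 + u)%N (spos t0 u s).

Lemma Z_right t0 n s j : dir t0 s -> Z t0 n s j = P s.+1 (s + n)%N.+1 * ((s + n)%N == j)%:R.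
Proof. by move=> Hd; have [E1 E2] := spw_right n Hd; rewrite /Z E1 E2. Qed.

Lemma Z_left t0 n s j : ~~ dir t0 s ->
  Z t0 n s j = if (n <= s)%N then P (s - n)%N.+1 s.+1 * ((s - n)%N == j)%:R else 0.
Proof.
move=> Hd; case: leqP => H; first by have [E1 E2] := spw_left Hd H; rewrite /Z E1 E2.
by rewrite /Z spw_left0 // mul0r.
Qed.

Lemma cc_right t0 u s : dir t0 s -> cc t0 u s = P s.+1 (s + u)%N.+1 * b (s + u)%N.+1.
Proof.
move=> Hd; have [E1 E2] := spw_right u Hd.
by rewrite /cc E1 E2 /dg dir_right.
Qed.

Lemma cc_left t0 u s : ~~ dir t0 s ->
  cc t0 u s = if (u <= s)%N then P (s - u)%N.+1 s.+1 * - (b (s - u)%N)^* else 0.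
Proof.
move=> Hd; case: leqP => H.
  have [E1 E2] := spw_left Hd H.
  by rewrite /cc E1 E2 /dg dir_left // (negbTE Hd).
by rewrite /cc spw_left0 // mul0r.
Qed.

Lemma spos_right t0 u s : dir t0 s -> spos t0 u s = (s + u)%N.
Proof. by move=> Hd; have [-> _] := spw_right u Hd. Qed.
Lemma spos_left t0 u s : ~~ dir t0 s -> (u <= s)%N -> spos t0 u s = (s - u)%N.
Proof. by move=> Hd H; have [-> _] := spw_left Hd H. Qed.

Lemma Pcat a m c : (a <= m)%N -> (m <= c)%N -> P a m * P m c = P a c.
Proof. by move=> H1 H2; rewrite /P -(@big_cat_nat _ _ _ m a c). Qed.

Lemma main_P k q : main_term alpha k q = (b q)^* * P q.+1 (q + k)%N ^+ 2 * b (q + k)%N.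
Proof.
rewrite /main_term /P prodrXl; congr (_ * (_ ^+ 2) * _).
symmetry; rewrite -add1n big_addn addKn; apply: eq_bigr => e _; by rewrite addnC.
Qed.

Lemma Z0_van k i : (0 < k)%N -> Z 0 k.*2 i i = 0.
Proof.
move=> Hk; case Hd: (dir 0 i).
  rewrite Z_right //; have -> : ((i + k.*2)%N == i) = false by apply/eqP; lia.
  by rewrite mulr0.
rewrite Z_left ?Hd //; case: leqP => // H.
have -> : ((i - k.*2)%N == i) = false by apply/eqP; lia.
by rewrite mulr0.
Qed.

Lemma dir_flipR u i : dir 0 i -> dir u.+1 (i + u)%N = false.
Proof. by move=> Hd; rewrite dirSt; have := dir_right u Hd; rewrite add0n => ->. Qed.

Lemma dir_flipL u i : ~~ dir 0 i -> (u <= i)%N -> dir u.+1 (i - u)%N = true.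
Proof. by move=> Hd H; rewrite dirSt; have := dir_left 0 H; rewrite add0n => ->. Qed.

Lemma S1_van k i u : (u < k.*2)%N ->
  cc 0 u i * Z u.+1 (k.*2 - u.+1)%N (spos 0 u i) i = 0.
Proof.
move=> Hu; case Hd: (dir 0 i).
  rewrite spos_right // Z_left ?dir_flipR //; case: leqP => H; last by rewrite mulr0.
  have -> : ((i + u - (k.*2 - u.+1))%N == i) = false by apply/eqP; lia.
  by rewrite !mulr0.
have Hd' : ~~ dir 0 i by rewrite Hd.
case: (leqP u i) => Hui; last by rewrite cc_left // leqNgt Hui mul0r.
rewrite spos_left // Z_right ?dir_flipL //.
have -> : ((i - u + (k.*2 - u.+1))%N == i) = false by apply/eqP; lia.
by rewrite !mulr0.
Qed.

Lemma flipR t u s : dir t s -> dir (t + u)%N.+1 (s + u)%N = false.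
Proof. by move=> Hd; rewrite dirSt dir_right. Qed.

Lemma flipL t u s : ~~ dir t s -> (u <= s)%N -> dir (t + u)%N.+1 (s - u)%N = true.
Proof. by move=> Hd H; rewrite dirSt dir_left // (negbTE Hd). Qed.

Definition F2 k i u1 u2 :=
  cc 0 u1 i * cc u1.+1 u2 (spos 0 u1 i) *
  Z (u1.+1 + u2)%N.+1 (k.*2 - u1.+1 - u2.+1)%N (spos u1.+1 u2 (spos 0 u1 i)) i.

Definition G k i u :=
  if dir 0 i then (if (k.-1 <= i + u)%N then - main_term alpha k (i + u - k.-1)%N else 0)
  else (if (u <= i)%N then - main_term alpha k (i - u)%N else 0).

Lemma F2_zero k i u1 u2 : (0 < k)%N -> (u1 < k.*2)%N -> (u2 < k.*2 - u1.+1)%N ->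
  u2 != k.-1 -> F2 k i u1 u2 = 0.
Proof.
move=> Hk Hu1 Hu2 /eqP Hne; rewrite /F2.
case Hd: (dir 0 i).
  have Hd1 : ~~ dir u1.+1 (i + u1)%N by rewrite dir_flipR.
  rewrite (spos_right _ Hd) (cc_right _ Hd).
  case: (leqP u2 (i + u1)) => H2; last by rewrite (cc_left _ Hd1) leqNgt H2 mulr0 mul0r.
  rewrite (spos_left Hd1 H2) Z_right ?flipL //.
  have -> : ((i + u1 - u2 + (k.*2 - u1.+1 - u2.+1))%N == i) = false by apply/eqP; lia.
  by rewrite !mulr0.
have Hd' : ~~ dir 0 i by rewrite Hd.
case: (leqP u1 i) => H1; last by rewrite (cc_left _ Hd') leqNgt H1 !mul0r.
have Hd1 : dir u1.+1 (i - u1)%N by rewrite dir_flipL.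
rewrite (spos_left Hd' H1) (spos_right _ Hd1) Z_left ?flipR //.
case: leqP => H3; last by rewrite mulr0.
have -> : ((i - u1 + u2 - (k.*2 - u1.+1 - u2.+1))%N == i) = false by apply/eqP; lia.
by rewrite !mulr0.
Qed.

Lemma F2_val k i u1 : (0 < k)%N -> (u1 < k)%N -> F2 k i u1 k.-1 = G k i u1.
Proof.
move=> Hk Hu1; rewrite /F2 /G.
case Hd: (dir 0 i).
  have Hd1 : ~~ dir u1.+1 (i + u1)%N by rewrite dir_flipR.
  rewrite (spos_right _ Hd) (cc_right _ Hd).
  case: (leqP k.-1 (i + u1)) => H2; last by rewrite (cc_left _ Hd1) leqNgt H2 mulr0 mul0r.
  rewrite (spos_left Hd1 H2) Z_right ?flipL // (cc_left _ Hd1) H2.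
  set q := (i + u1 - k.-1)%N.
  have -> : (q + (k.*2 - u1.+1 - k.-1.+1))%N = i by rewrite /q; lia.
  have -> : (i + u1).+1 = (q + k)%N by rewrite /q; lia.
  rewrite eqxx mulr1 main_P.
  have -> : P q.+1 (q + k) = P q.+1 i.+1 * P i.+1 (q + k) by rewrite Pcat // /q; lia.
  by ring.
have Hd' : ~~ dir 0 i by rewrite Hd.
case: (leqP u1 i) => H1; last by rewrite (cc_left _ Hd') leqNgt H1 !mul0r.
have Hd1 : dir u1.+1 (i - u1)%N by rewrite dir_flipL.
rewrite (spos_left Hd' H1) (spos_right _ Hd1) Z_left ?flipR // (cc_left _ Hd') H1.
rewrite (cc_right _ Hd1).
set q := (i - u1)%N.
have -> : (k.*2 - u1.+1 - k.-1.+1 <= q + k.-1)%N = true by rewrite /q; lia.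
have -> : (q + k.-1 - (k.*2 - u1.+1 - k.-1.+1))%N = i by rewrite /q; lia.
have -> : (q + k.-1).+1 = (q + k)%N by rewrite /q; lia.
rewrite eqxx mulr1 main_P.
have -> : P q.+1 (q + k) = P q.+1 i.+1 * P i.+1 (q + k) by rewrite Pcat // /q; lia.
by ring.
Qed.

Lemma W_exp' n t0 s j :
  W t0 n s j = Z t0 n s j +
    \sum_(u < n) cc t0 u s * W (t0 + u)%N.+1 (n - u.+1)%N (spos t0 u s) j.
Proof. by rewrite W_exp. Qed.

Definition Rem k i :=
  \sum_(u1 < k.*2) \sum_(u2 < k.*2 - u1.+1) \sum_(u3 < k.*2 - u1.+1 - u2.+1)
    cc 0 u1 i * cc u1.+1 u2 (spos 0 u1 i) *
    cc (u1.+1 + u2)%N.+1 u3 (spos u1.+1 u2 (spos 0 u1 i)) *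
    W ((u1.+1 + u2)%N.+1 + u3)%N.+1 (k.*2 - u1.+1 - u2.+1 - u3.+1)%N
      (spos (u1.+1 + u2)%N.+1 u3 (spos u1.+1 u2 (spos 0 u1 i))) i.

Lemma T_dec k i : (0 < k)%N ->
  W 0 k.*2 i i = \sum_(u1 < k.*2) \sum_(u2 < k.*2 - u1.+1) F2 k i u1 u2 + Rem k i.
Proof.
move=> Hk; rewrite W_exp' Z0_van // add0r /Rem -big_split /=.
apply: eq_bigr => [[u1 Hu1]] _ /=.
rewrite add0n W_exp' mulrDr S1_van // add0r big_distrr /= -big_split /=.
apply: eq_bigr => u2 _.
rewrite W_exp' !mulrDr; congr (_ + _); first by rewrite /F2 !mulrA.
rewrite !big_distrr /=; apply: eq_bigr => u3 _; by rewrite !mulrA.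
Qed.

Lemma sumF2 k i : (0 < k)%N ->
  \sum_(u1 < k.*2) \sum_(u2 < k.*2 - u1.+1) F2 k i u1 u2 = \sum_(u1 < k) G k i u1.
Proof.
move=> Hk.
rewrite (eq_bigr (fun u1 : 'I_(k.*2) => if (u1 < k)%N then G k i u1 else 0)); last first.
  move=> [u1 Hu1] _ /=.
  rewrite (eq_bigr (fun u2 : 'I_(k.*2 - u1.+1) => F2 k i u1 k.-1 * (u2 == k.-1 :> nat)%:R)); last first.
    move=> [u2 Hu2] _ /=; case: eqP => [->|Hne]; first by rewrite mulr1.
    by rewrite mulr0 F2_zero //; apply/eqP.
  rewrite (sum_delta' _ _ (fun => F2 k i u1 k.-1)).
  have -> : (k.-1 < k.*2 - u1.+1)%N = (u1 < k)%N by apply/idP/idP; lia.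
  by case: ltnP => // H; rewrite F2_val.
rewrite (@sum_widen _ k (k.*2) (fun u1 => if (u1 < k)%N then G k i u1 else 0)).
- by apply: eq_bigr => u _; rewrite ltn_ord.
- by rewrite -addnn leq_addr.
- by move=> l Hl _; rewrite ltnNge Hl.
Qed.

Definition Hm k i u := if (u <= i)%N then - main_term alpha k (i - u)%N else 0.

Lemma sumG k i : (0 < k)%N -> \sum_(u < k) G k i u = \sum_(u < k) Hm k i u.
Proof.
move=> Hk; rewrite /G; case Hd: (dir 0 i); last by [].
rewrite -(big_mkord xpredT (fun u => if (k.-1 <= i + u)%N then
   - main_term alpha k (i + u - k.-1)%N else 0)) big_rev_mkord subn0.
apply: eq_bigr => [[u Hu]] _ /=; rewrite /Hm.
have -> : (k.-1 <= i + (k - u.+1))%N = (u <= i)%N by apply/idP/idP; lia.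
case: leqP => // H.
by have -> : (i + (k - u.+1) - k.-1)%N = (i - u)%N by lia.
Qed.

Lemma shift_sum (f : nat -> R) B u : (u <= B)%N ->
  \sum_(i < B) (if (u <= i)%N then f (i - u)%N else 0) = \sum_(q < B - u) f q.
Proof.
move=> H; rewrite -(big_mkord xpredT (fun i => if (u <= i)%N then f (i - u)%N else 0)).
rewrite -(big_mkord xpredT f) (@big_cat_nat _ _ _ u 0 B) //=.
rewrite big1_seq ?add0r; last first.
  move=> i /andP[_]; rewrite mem_index_iota => /andP[_ Hi].
  by rewrite leqNgt Hi.
rewrite -{1}(add0n u) big_addn; apply: eq_bigr => i _.
by rewrite leq_addl addnK.
Qed.

Definition g p := `|b p.+1| ^+ 3 + `|b p| ^+ 3.
Arguments g : simpl never.

Lemma g_ge0 p : 0 <= g p.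
Proof. by rewrite /g addr_ge0 // exprn_ge0. Qed.

Lemma dg_cube t p : `|dg t p| ^+ 3 <= g p.
Proof.
rewrite /dg /g; case: dir.
  by rewrite lerDl exprn_ge0.
by rewrite normrN norm_conjC lerDr exprn_ge0.
Qed.

Lemma cc_norm t u s : `|cc t u s| <= `|dg (t + u)%N (spos t u s)|.
Proof. by rewrite /cc normrM; apply: ler_piMl; [exact: normr_ge0 | exact: spw_norm]. Qed.

Lemma ac_le (a c : R) : 0 <= a -> 0 <= c -> a * c <= a ^+ 2 + c ^+ 2.
Proof.
move=> Ha0 Hc0; case/orP: (real_leVge (ger0_real Ha0) (ger0_real Hc0)) => H.
  apply: le_trans (_ : c ^+ 2 <= _); last by rewrite lerDr exprn_ge0.
  by rewrite expr2; apply: ler_wpM2r.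
apply: le_trans (_ : a ^+ 2 <= _); last by rewrite lerDl exprn_ge0.
by rewrite expr2; apply: ler_wpM2l.
Qed.

Lemma a2c_le (a c : R) : 0 <= a -> 0 <= c -> a ^+ 2 * c <= a ^+ 3 + c ^+ 3.
Proof.
move=> Ha0 Hc0; case/orP: (real_leVge (ger0_real Ha0) (ger0_real Hc0)) => H.
  apply: le_trans (_ : c ^+ 3 <= _); last by rewrite lerDr exprn_ge0.
  rewrite [c ^+ 3]exprSr; apply: ler_wpM2r => //.
  by rewrite !expr2; apply: ler_pM.
apply: le_trans (_ : a ^+ 3 <= _); last by rewrite lerDl exprn_ge0.
by rewrite [a ^+ 3]exprSr; apply: ler_wpM2l => //; exact: exprn_ge0.
Qed.

Lemma xyz_le (x y z : R) : 0 <= x -> 0 <= y -> 0 <= z ->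
  x * y * z <= 2 * (x ^+ 3 + y ^+ 3 + z ^+ 3).
Proof.
move=> Hx Hy Hz.
apply: le_trans (_ : (x ^+ 2 + y ^+ 2) * z <= _).
  by apply: ler_wpM2r => //; exact: ac_le.
rewrite mulrDl.
apply: le_trans (_ : (x ^+ 3 + z ^+ 3) + (y ^+ 3 + z ^+ 3) <= _).
  by apply: lerD; exact: a2c_le.
rewrite mulr2n mulrDl mul1r.
have h : z ^+ 3 <= x ^+ 3 + y ^+ 3 + z ^+ 3 by rewrite lerDr addr_ge0 // exprn_ge0.
have e : x ^+ 3 + z ^+ 3 + (y ^+ 3 + z ^+ 3) = (x ^+ 3 + y ^+ 3 + z ^+ 3) + z ^+ 3 by ring.
by rewrite e lerD2l.
Qed.

Lemma prod3 (c1 c2 c3 w : R) t1 q1 t2 q2 t3 q3 :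
  `|c1| <= `|dg t1 q1| -> `|c2| <= `|dg t2 q2| -> `|c3| <= `|dg t3 q3| -> `|w| <= 1 ->
  `|c1 * c2 * c3 * w| <= 2 * (g q1 + g q2 + g q3).
Proof.
move=> H1 H2 H3 Hw; rewrite !normrM.
apply: le_trans (_ : `|dg t1 q1| * `|dg t2 q2| * `|dg t3 q3| <= _).
  rewrite -[X in _ <= X]mulr1; apply: ler_pM => //; first by rewrite !mulr_ge0.
  apply: ler_pM => //; first by rewrite mulr_ge0.
  exact: ler_pM.
apply: le_trans (xyz_le (normr_ge0 _) (normr_ge0 _) (normr_ge0 _)) _.
apply: ler_wpM2l => //; apply: lerD; first apply: lerD; exact: dg_cube.
Qed.

Lemma sum_inj (f : nat -> nat) (h : nat -> R) B M : injective f ->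
  (forall i, (i < B)%N -> (f i < M)%N) -> (forall p, 0 <= h p) ->
  \sum_(i < B) h (f i) <= \sum_(p < M) h p.
Proof.
move=> finj Hf Hh.
pose hh (i : 'I_B) : 'I_M := Ordinal (Hf i (ltn_ord i)).
have hinj : injective hh by move=> i j /(congr1 val) /= /finj /val_inj.
have -> : \sum_(i < B) h (f i) = \sum_(i in [set: 'I_B]) h (hh i).
  by apply: eq_bigl => i; rewrite inE.
rewrite -(@big_imset _ _ _ _ _ hh [set: 'I_B] (fun j : 'I_M => h j)) /=; last exact: in2W.
rewrite [X in _ <= X](bigID (mem [set hh x | x in [set: 'I_B]])) /= lerDl.
by apply: sumr_ge0 => j _; exact: Hh.
Qed.

Lemma sum_le_cnt n m (F : 'I_m -> R) C : (m <= n)%N -> 0 <= C ->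
  (forall u, F u <= C) -> \sum_(u < m) F u <= n%:R * C.
Proof.
move=> Hm HC HF; apply: le_trans (ler_sum _ (fun u _ => HF u)) _.
rewrite sumr_const card_ord -[C *+ m]mulr_natl; apply: ler_wpM2r => //.
by rewrite ler_nat.
Qed.

Lemma Rem_bound k B :
  \sum_(i < B) `|Rem k i| <=
  (k.*2)%:R * ((k.*2)%:R * ((k.*2)%:R *
     (2 * (\sum_(p < B + k.*2) g p + \sum_(p < B + k.*2) g p + \sum_(p < B + k.*2) g p)))).
Proof.
set n := k.*2; set G3 := \sum_(p < B + n) g p.
have G3ge0 : 0 <= G3 by apply: sumr_ge0 => p _; exact: g_ge0.
have Hi : forall i, `|Rem k i| <=
   \sum_(u1 < n) \sum_(u2 < n - u1.+1) \sum_(u3 < n - u1.+1 - u2.+1)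
     2 * (g (spos 0 u1 i) + g (spos u1.+1 u2 (spos 0 u1 i)) +
          g (spos (u1.+1 + u2)%N.+1 u3 (spos u1.+1 u2 (spos 0 u1 i)))).
  move=> i; rewrite /Rem; apply: le_trans (ler_norm_sum _ _ _) _; apply: ler_sum => u1 _.
  apply: le_trans (ler_norm_sum _ _ _) _; apply: ler_sum => u2 _.
  apply: le_trans (ler_norm_sum _ _ _) _; apply: ler_sum => u3 _.
  apply: prod3; [exact: cc_norm | exact: cc_norm | exact: cc_norm | exact: W_le1].
apply: le_trans; first by apply: ler_sum => i _; exact: Hi.
rewrite exchange_big /=; apply: sum_le_cnt;
  [done | by rewrite !mulr_ge0 ?ler0n ?addr_ge0 | move=> u1].
rewrite exchange_big /=; apply: sum_le_cnt;
  [by rewrite /n; lia | by rewrite !mulr_ge0 ?ler0n ?addr_ge0 | move=> u2].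
rewrite exchange_big /=; apply: sum_le_cnt;
  [by rewrite /n; lia | by rewrite !mulr_ge0 ?ler0n ?addr_ge0 | move=> u3].
have Hu1 := ltn_ord u1; have Hu2 := ltn_ord u2; have Hu3 := ltn_ord u3.
rewrite -mulr_sumr big_split /= big_split /=; apply: ler_wpM2l => //.
apply: lerD; first apply: lerD.
- apply: (@sum_inj (spos 0 u1) g B (B + n)); [exact: spos_inj | | exact: g_ge0].
  by move=> i Hi'; have := spos_le 0 u1 i; lia.
- apply: (@sum_inj (fun i => spos u1.+1 u2 (spos 0 u1 i)) g B (B + n));
    [ by move=> x y /spos_inj /spos_inj | | exact: g_ge0].
  move=> i Hi'; have := spos_le 0 u1 i; have := spos_le u1.+1 u2 (spos 0 u1 i); lia.
- apply: (@sum_inj (fun i => spos (u1.+1 + u2)%N.+1 u3 (spos u1.+1 u2 (spos 0 u1 i))) g B (B + n));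
    [ by move=> x y /spos_inj /spos_inj /spos_inj | | exact: g_ge0].
  move=> i Hi'; have := spos_le 0 u1 i; have := spos_le u1.+1 u2 (spos 0 u1 i).
  have := spos_le (u1.+1 + u2)%N.+1 u3 (spos u1.+1 u2 (spos 0 u1 i)); lia.
Qed.

Lemma dg_zero N t p : (forall j, (N <= j)%N -> alpha j = 0) -> (N < p)%N -> dg t p = 0.
Proof.
move=> HN Hp; rewrite /dg; case: dir; first by rewrite /= HN //; lia.
case: p Hp => [|p] Hp //=; by rewrite HN ?rmorph0 ?oppr0 //; lia.
Qed.

Lemma trace_zero N k i : (0 < k)%N -> (forall j, (N <= j)%N -> alpha j = 0) ->
  (N + 1 + k.*2 <= i)%N -> W 0 k.*2 i i = 0.
Proof.
move=> Hk HN Hi; rewrite W_exp' Z0_van // add0r big1 // => u _.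
rewrite /cc (@dg_zero N (0 + u)%N (spos 0 u i) HN) ?mulr0 ?mul0r //.
have := spos_ge 0 u i; have := ltn_ord u; lia.
Qed.

Lemma G3_le M : \sum_(p < M) g p <=
  \sum_(p < M.+1) `|b p| ^+ 3 + \sum_(p < M.+1) `|b p| ^+ 3.
Proof.
rewrite /g big_split /=; apply: lerD.
  by rewrite [X in _ <= X]big_ord_recl /= lerDr exprn_ge0.
by rewrite [X in _ <= X]big_ord_recr /= lerDl exprn_ge0.
Qed.

Lemma final_bound : (exists N, forall j, (N <= j)%N -> alpha j = 0) ->
  forall k : nat, (2 <= k)%N ->
  `| trC alpha k + k%:R * fsum (main_term alpha k) |
        <= 96%:R * k%:R ^+ 3 * fsum (fun n => `|aext alpha n| ^+ 3).
Proof.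
move=> [N HN] k Hk.
have Hk0 : (0 < k)%N by lia.
set n := k.*2.
set B := (N + 1 + n + k)%N.
have Etr : trC alpha k = \sum_(i < B) W 0 n i i.
  have Hsupp : forall i, (N + 1 + n <= i)%N -> Cpow alpha k i i = 0.
    by move=> i Hi; rewrite Cpow_W (trace_zero Hk0 HN).
  rewrite /trC (fsumE Hsupp (M := B)); last by rewrite /B; lia.
  by apply: eq_bigr => i _; rewrite Cpow_W.
have Em : forall M, (N < M)%N -> fsum (main_term alpha k) = \sum_(q < M) main_term alpha k q.
  move=> M HM; apply: fsumE; last exact: HM.
  move=> q Hq; rewrite /main_term.
  have -> : b q = 0 by case: q Hq => [|q] Hq //=; rewrite HN //; lia.
  by rewrite rmorph0 !mul0r.
have Es : fsum (fun n => `|aext alpha n| ^+ 3) = \sum_(p < (B + n).+1) `|b p| ^+ 3.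
  apply: (@fsumE _ _ N.+1); last by rewrite /B; lia.
  move=> p Hp; have -> : b p = 0 by case: p Hp => [|p] Hp //=; rewrite HN //; lia.
  by rewrite normr0 expr0n.
have Emain : \sum_(i < B) \sum_(u < k) Hm k i u = - (k%:R * fsum (main_term alpha k)).
  rewrite exchange_big /=.
  rewrite (eq_bigr (fun u : 'I_k => - fsum (main_term alpha k))); last first.
    move=> u _; rewrite /Hm (shift_sum (fun q => - main_term alpha k q)); last first.
      by have := ltn_ord u; rewrite /B; lia.
    rewrite sumrN (Em (B - u)%N) //; by have := ltn_ord u; rewrite /B; lia.
  by rewrite sumr_const card_ord mulr_natl mulNrn.
have Edec : trC alpha k = - (k%:R * fsum (main_term alpha k)) + \sum_(i < B) Rem k i.
  rewrite Etr -Emain -big_split /=; apply: eq_bigr => i _.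
  by rewrite T_dec // sumF2 // sumG.
rewrite Edec addrAC addNr add0r.
apply: le_trans (ler_norm_sum _ _ _) _.
apply: le_trans (Rem_bound k B) _.
rewrite Es.
set G := \sum_(p < B + k.*2) g p.
set S := \sum_(p < (B + n).+1) `|b p| ^+ 3.
have HG : G <= S + S by exact: G3_le.
have -> : (k.*2)%:R * ((k.*2)%:R * ((k.*2)%:R * (2 * (G + G + G)))) =
          (48%:R * k%:R ^+ 3) * G :> R.
  rewrite -mul2n natrM; ring.
have -> : 96%:R * k%:R ^+ 3 * S = (48%:R * k%:R ^+ 3) * (S + S) :> R by ring.
apply: ler_wpM2l => //.
by rewrite mulr_ge0 ?ler0n // exprn_ge0 // ler0n.
Qed.

End Walk.

Theorem lemma3p3 :
  exists K : nat,
  forall (R : numClosedFieldType) (alpha : nat -> R),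
    (forall j, `|alpha j| < 1) ->
    (exists N, forall j, (N <= j)%N -> alpha j = 0) ->
    forall k : nat, (2 <= k)%N ->
      `| trC alpha k + k%:R * fsum (main_term alpha k) |
        <= K%:R * k%:R ^+ 3 * fsum (fun n => `|aext alpha n| ^+ 3).
Proof.
exists 96%N => R alpha Ha HN k Hk.
exact: (final_bound Ha HN Hk).
Qed.
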